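(* Let $M$ be a unipotent square complex matrix and $k$ a positive integer. Then $F(M)=F(M^k)$, where for a matrix $X$, $F(X)$ denotes the field obtained by adjoining all entries of $X$ to $\mathbb{Q}$.
   Context: A matrix $M$ is unipotent if $M=I+T$ with $T$ nilpotent. *)

(* Defs.v *)
From HB Require Import structures.
From mathcomp Require Import all_boot all_order all_algebra.
From mathcomp Require Import complex.
From mathcomp Require Import reals.
Set Implicit Arguments. Unset Strict Implicit. Unset Printing Implicit Defensive.
Import Order.TTheory GRing.Theory Num.Theory.
Local Open Scope ring_scope.

Definition mx_nilpotent (F : pzRingType) (n : nat) (T : 'M[F]_n) : Prop :=
  exists m : nat, T ^+ m = 0.

Definition mx_unipotent (F : pzRingType) (n : nat) (M : 'M[F]_n) : Prop :=
  exists T : 'M[F]_n, mx_nilpotent T /\ M = 1%:M + T.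

Definition is_subfield (F : fieldType) (S : F -> Prop) : Prop :=
  [/\ S 0, S 1,
      (forall x y, S x -> S y -> S (x + y)),
      (forall x, S x -> S (- x)) &
      (forall x y, S x -> S y -> S (x * y))] /\
  (forall x, S x -> S x^-1).

(* F(X): the field obtained by adjoining all entries of X to Q, i.e. the
   smallest subfield of F containing every entry of X (in characteristic 0
   every subfield contains Q). *)
Definition entry_field (F : fieldType) (m n : nat) (X : 'M[F]_(m, n)) : F -> Prop :=
  fun z => forall S : F -> Prop, is_subfield S -> (forall i j, S (X i j)) -> S z.

(* Main.v *)
Require Import Defs.
From HB Require Import structures.
From mathcomp Require Import all_boot all_order all_algebra.
From mathcomp Require Import complex.
From mathcomp Require Import reals.
Import Order.TTheory GRing.Theory Num.Theory.
Local Open Scope ring_scope.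
Local Open Scope complex_scope.
From mathcomp Require Import ring.

Lemma factX (k : nat) : (0 < k)%N -> exists u : {poly rat},
  ('X + 1) ^+ k - 1 = u * 'X /\ u.[0] != 0.
Proof.
move=> k0.
have : root (('X + 1) ^+ k - 1 : {poly rat}) 0.
  by rewrite /root !hornerE expr1n subrr.
case/factor_theorem => u Hu; rewrite polyC0 subr0 in Hu.
exists u; split => //.
have := congr1 (fun p => (deriv p).[0]) Hu => /=.
rewrite derivB derivC subr0 deriv_exp derivD derivX derivC addr0 mul1r.
rewrite derivM derivX mulr1 hornerMn !hornerE expr1n.
move=> <-; case: k k0 Hu => // k _ _; by rewrite ?mul1r pnatr_eq0.
Qed.

Lemma poly_inv (k : nat) : (0 < k)%N -> forall d, exists c : nat -> rat,
  exists h : {poly rat},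
  'X - \sum_(i < d) (c i)%:P * (('X + 1) ^+ k - 1) ^+ i = 'X ^+ d * h.
Proof.
move=> k0; have [u [Hu u0]] := @factX k k0.
elim=> [|d [c [h IH]]].
  by exists (fun _ => 0), 'X; rewrite big_ord0 subr0 expr0 mul1r.
pose a := h.[0] / u.[0] ^+ d.
have : root (h - a%:P * u ^+ d) 0.
  by rewrite /root !hornerE /a divfK ?subrr // expf_neq0.
case/factor_theorem => q; rewrite polyC0 subr0 => Hq.
exists (fun i => if i == d then a else c i), q.
rewrite big_ord_recr /= eqxx.
rewrite (eq_bigr (fun i : 'I_d => (c i)%:P * (('X + 1) ^+ k - 1) ^+ i)); last first.
  by move=> i _; rewrite (ltn_eqF (ltn_ord i)).
have Hh : h = q * 'X + a%:P * u ^+ d by rewrite -Hq subrK.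
rewrite opprD addrA IH Hu Hh exprMn exprSr; ring.
Qed.

Section Sub.
Context {F : fieldType} {S : F -> Prop} (HS : is_subfield S).

Lemma S0 : S 0. Proof. by case: HS; case. Qed.
Lemma S1 : S 1. Proof. by case: HS; case. Qed.
Lemma SD x y : S x -> S y -> S (x + y). Proof. by case: HS => -[_ _ H _ _] _; apply: H. Qed.
Lemma SN x : S x -> S (- x). Proof. by case: HS => -[_ _ _ H _] _; apply: H. Qed.
Lemma SM x y : S x -> S y -> S (x * y). Proof. by case: HS => -[_ _ _ _ H] _; apply: H. Qed.
Lemma SV x : S x -> S x^-1. Proof. by case: HS => _ H; apply: H. Qed.

Lemma Snat n : S n%:R.
Proof. elim: n => [|n IH]; first exact: S0. by rewrite mulrS; apply: SD => //; apply: S1. Qed.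

Lemma Sint z : S z%:~R.
Proof.
case: z => n; first by rewrite -pmulrn; apply: Snat.
by rewrite NegzE mulrNz; apply: SN; rewrite -pmulrn; apply: Snat.
Qed.

Lemma Srat q : S (ratr q).
Proof. by rewrite /ratr; apply: SM; [apply: Sint | apply: SV; apply: Sint]. Qed.

Lemma Ssum (I : Type) (r : seq I) (P : pred I) (f : I -> F) :
  (forall i, P i -> S (f i)) -> S (\sum_(i <- r | P i) f i).
Proof. move=> H; apply: (big_ind S) => //; [exact: S0 | exact: SD]. Qed.

Definition Sm {m n} (A : 'M[F]_(m, n)) := forall i j, S (A i j).

Lemma Sm0 m n : Sm (0%R : 'M[F]_(m, n)).
Proof. by move=> i j; rewrite mxE; apply: S0. Qed.
Lemma SmC n a : S a -> Sm (a%:M : 'M[F]_n).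
Proof. by move=> Ha i j; rewrite mxE; case: eqP => _ /=; [rewrite mulr1n | exact: S0]. Qed.
Lemma SmD m n (A B : 'M[F]_(m, n)) : Sm A -> Sm B -> Sm (A + B).
Proof. by move=> HA HB i j; rewrite mxE; apply: SD. Qed.
Lemma SmN m n (A : 'M[F]_(m, n)) : Sm A -> Sm (- A).
Proof. by move=> HA i j; rewrite mxE; apply: SN. Qed.
Lemma SmM m n p (A : 'M[F]_(m, n)) (B : 'M[F]_(n, p)) : Sm A -> Sm B -> Sm (A *m B).
Proof. by move=> HA HB i j; rewrite mxE; apply: Ssum => l _; apply: SM. Qed.
Lemma SmX n (A : 'M[F]_n.+1) e : Sm A -> Sm (A ^+ e).
Proof.
move=> HA; elim: e => [|e IH]; first by rewrite expr0; apply: SmC; apply: S1.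
by rewrite exprS; apply: SmM.
Qed.
Lemma Smsum n (I : Type) (r : seq I) (P : pred I) (f : I -> 'M[F]_n) :
  (forall i, P i -> Sm (f i)) -> Sm (\sum_(i <- r | P i) f i).
Proof. move=> H; apply: (big_ind Sm) => //; [exact: Sm0 | exact: SmD]. Qed.

End Sub.
Arguments Sm {F} S {m n} A.

Lemma key (F : numFieldType) (S : F -> Prop) (HS : is_subfield S) n (M : 'M[F]_n) k :
  mx_unipotent M -> (0 < k)%N -> Sm S (M ^+ k) -> Sm S M.
Proof.
case: n M => [|n] M; first by move=> _ _ _ [] [].
case=> T [[m Tm] ->] k0 HMk.
have [c [h E]] := @poly_inv k k0 m.
pose ev := fun p : {poly rat} => horner_mx T (map_poly (ratr : rat -> F) p).
have := congr1 ev E; rewrite /ev.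
rewrite !(rmorphB, rmorph_sum, rmorphM, rmorphXn) /= map_polyX horner_mx_X Tm mul0r.
under eq_bigr => i _ do rewrite !(rmorphB, rmorphM, rmorphXn, rmorphD, rmorph1) /= map_polyC map_polyX horner_mx_C horner_mx_X.
move/eqP; rewrite subr_eq0 => /eqP ->.
apply: (SmD HS); first by apply: (SmC HS); apply: (S1 HS).
apply: (Smsum HS) => i _.
apply: (SmM HS); first by apply: (SmC HS); apply: (Srat HS).
apply: (SmX HS); apply: (SmD HS).
  by rewrite addrC.
by apply: (SmN HS); apply: (SmC HS); apply: (S1 HS).
Qed.

Theorem lemma7p6 (R : realType) (n : nat) (M : 'M[R[i]]_n) (k : nat) :
  mx_unipotent M -> (0 < k)%N ->
  forall z : R[i], entry_field M z <-> entry_field (M ^+ k) z.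
Proof.
move=> HM k0 z; rewrite /entry_field; split.
  move=> Hz S HS HX; apply: (Hz S HS). have := @key _ S HS n M k HM k0. 
  move=> H; exact: (H HX).
move=> Hz S HS HX; apply: (Hz S HS).
case: n M HM HX Hz => [|n] M HM HX Hz; first by case.
exact: (SmX HS).
Qed.
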